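(* Let $T$ be a tree with colour classes $F_1$ and $F_2$. Let $R\subseteq F_1$ with $|R|\le 2$ such that, if $|R|=2$, the two vertices of $R$ have no common neighbour in $T$. Let $\varepsilon>0$ and $\alpha>2\varepsilon$. Let $G$ be a graph and let $(X,Y)$ be an $\varepsilon$-regular pair in $G$ with density $d(X,Y)>3\alpha$, such that $|F_1|\le\varepsilon|X|$ and $|F_2|\le \varepsilon|Y|$. Let $X'\subseteq X$ and $Y'\subseteq Y$ satisfy $|X'|>2\frac{\varepsilon}{\alpha}|X|$ and $|Y'|>2\frac{\varepsilon}{\alpha}|Y|$. Let $\varphi$ be any injective map from $R$ into the set of vertices of $X'$ having more than $3\varepsilon|Y|$ neighbours in $Y'$. Then $\varphi$ can be extended to an injective map $\varphi:V(T)\to X\cup Y$ which maps every edge of $T$ to an edge of $G$ and satisfies $\varphi(F_1)\subseteq X'$ and $\varphi(F_2)\subseteq Y'$.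
   Context: For disjoint vertex sets $X,Y$ of a graph $G$, $E(X,Y)$ is the set of edges with one end in $X$ and the other in $Y$, and the density is $d(X,Y)=\frac{|E(X,Y)|}{|X||Y|}$. The pair $(X,Y)$ is $\varepsilon$-regular if for all $X'\subseteq X$, $Y'\subseteq Y$ with $|X'|\ge\varepsilon|X|$ and $|Y'|\ge \varepsilon|Y|$ we have $|d(X',Y')-d(X,Y)|\le\varepsilon$. *)

(* Defs.v *)
From mathcomp Require Import all_boot all_order all_algebra.
Set Implicit Arguments. Unset Strict Implicit. Unset Printing Implicit Defensive.
Import Order.TTheory GRing.Theory Num.Theory.
Local Open Scope ring_scope.

Definition simple_graph (V : finType) (e : rel V) : Prop :=
  symmetric e /\ irreflexive e.

Definition connected_graph (V : finType) (e : rel V) : Prop :=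
  forall x y : V, connect e x y.

Definition acyclic_graph (V : finType) (e : rel V) : Prop :=
  forall s : seq V, uniq s -> (3 <= size s)%N -> ~~ cycle e s.

Definition is_tree (V : finType) (e : rel V) : Prop :=
  [/\ simple_graph e, (0 < #|V|)%N, connected_graph e & acyclic_graph e].

Definition colour_classes (V : finType) (e : rel V) (F1 F2 : {set V}) : Prop :=
  [/\ F1 :&: F2 = set0, F1 :|: F2 = [set: V] &
      forall u v, e u v -> (u \in F1) && (v \in F2) || (u \in F2) && (v \in F1)].

(* |E(A,B)| : number of edges with one end in A and the other in B
   (A, B are disjoint in all uses). *)
Definition n_edges (V : finType) (e : rel V) (A B : {set V}) : nat :=
  #|[set p : V * V | (p.1 \in A) && (p.2 \in B) && e p.1 p.2]|.

Definition density (R : realFieldType) (V : finType) (e : rel V) (A B : {set V}) : R :=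
  (n_edges e A B)%:R / (#|A| * #|B|)%:R.

Definition eps_regular (R : realFieldType) (V : finType) (e : rel V) (eps : R)
    (X Y : {set V}) : Prop :=
  forall X' Y' : {set V}, X' \subset X -> Y' \subset Y ->
    eps * #|X|%:R <= #|X'|%:R -> eps * #|Y|%:R <= #|Y'|%:R ->
    `|density R e X' Y' - density R e X Y| <= eps.

(* Main.v *)
Require Import Defs.
From mathcomp Require Import all_boot all_order all_algebra.
From mathcomp Require Import ring lra.
Set Implicit Arguments. Unset Strict Implicit. Unset Printing Implicit Defensive.
Import Order.TTheory GRing.Theory Num.Theory.
Local Open Scope ring_scope.

Section NE.
Variables (V : finType) (e : rel V).

Lemma n_edges_sum (A B : {set V}) :
  n_edges e A B = (\sum_(x in A) #|[set y in B | e x y]|)%N.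
Proof.
rewrite /n_edges.
transitivity (\sum_(x in A) \sum_(y in B | e x y) 1)%N.
  rewrite pair_big_dep /= -sum1_card; apply: eq_bigl => -[x y] /=.
  by rewrite inE andbA.
by apply: eq_bigr => x _; rewrite sum1_card; apply: eq_card => y; rewrite inE.
Qed.

Lemma n_edgesC (A B : {set V}) : symmetric e -> n_edges e A B = n_edges e B A.
Proof.
move=> se; rewrite /n_edges.
have -> : [set p : V * V | (p.1 \in B) && (p.2 \in A) && e p.1 p.2] =
  (fun p : V * V => (p.2, p.1)) @: [set p : V * V | (p.1 \in A) && (p.2 \in B) && e p.1 p.2].
  apply/setP => -[x y]; rewrite inE; apply/idP/imsetP => /=.
    by move=> /andP[/andP[xB yA] exy]; exists (y, x); rewrite // inE yA xB se.
  by move=> [[a b]]; rewrite inE /= => /andP[/andP[aA bB] eab] [-> ->]; rewrite aA bB se.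
by rewrite card_imset // => -[a b] [c d] [-> ->].
Qed.

Lemma n_edges_le (A B : {set V}) : (n_edges e A B <= #|A| * #|B|)%N.
Proof.
rewrite /n_edges -cardsX; apply: subset_leq_card; apply/subsetP => -[x y].
by rewrite !inE /= => /andP[/andP[-> ->] _].
Qed.
End NE.
Section Reg.
Variables (R : realFieldType) (V : finType) (e : rel V) (X Y X' Y' : {set V}) (eps alpha : R).
Hypotheses (eps_gt0 : 0 < eps) (ealpha : 2 * eps < alpha) (se : symmetric e)
  (reg : eps_regular e eps X Y) (dens : 3 * alpha < density R e X Y)
  (sX' : X' \subset X) (sY' : Y' \subset Y)
  (bX : 2 * (eps / alpha) * #|X|%:R < #|X'|%:R)
  (bY : 2 * (eps / alpha) * #|Y|%:R < #|Y'|%:R).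

Let d := density R e X Y.

Lemma density_le1 (A B : {set V}) : density R e A B <= 1.
Proof.
rewrite /density; have [->|pos] := eqVneq (#|A| * #|B|)%N 0%N.
  by rewrite invr0 mulr0 ler01.
rewrite ler_pdivrMr ?mul1r ?ler_nat ?n_edges_le // ltr0n lt0n //.
Qed.

Lemma density_ge0 (A B : {set V}) : 0 <= density R e A B.
Proof. by rewrite /density divr_ge0 // ler0n. Qed.

Let alpha_pos : 0 < alpha. Proof. move: eps_gt0 ealpha; lra. Qed.
Let k := eps / alpha.
Let hk : k * alpha = eps. Proof. by rewrite /k divfK // gt_eqF. Qed.
Let k_pos : 0 < k. Proof. by rewrite divr_gt0. Qed.
Let d_le1 : d <= 1. Proof. exact: density_le1. Qed.

Lemma card_pos_of (A B : {set V}) (c : R) : 0 <= c -> B \subset A -> c * #|A|%:R < #|B|%:R ->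
  (0 < #|A|)%N.
Proof.
move=> c0 sBA h; have : (0 < #|B|)%N.
  by rewrite -(ltr0n R); apply: le_lt_trans h; rewrite mulr_ge0.
by move/leq_trans; apply; apply: subset_leq_card.
Qed.

Lemma X_pos : (0 < #|X|)%N.
Proof. by apply: (card_pos_of _ sX' bX); rewrite mulr_ge0 ?ltW. Qed.
Lemma Y_pos : (0 < #|Y|)%N.
Proof. by apply: (card_pos_of _ sY' bY); rewrite mulr_ge0 ?ltW. Qed.

Lemma eps_le_c : eps <= 2 * (eps / alpha).
Proof. rewrite -/k; have := d_le1; have := hk; have := k_pos; have : 3 * alpha < d := dens.
move: eps_gt0 ealpha => ? ? ? k0 hk' d1.
have a2 : 0 < 2 - alpha by lra.
have := mulr_gt0 k0 a2; nra. Qed.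

Lemma X'_big : eps * #|X|%:R < #|X'|%:R.
Proof. apply: le_lt_trans bX; rewrite ler_wpM2r ?ler0n //; exact: eps_le_c. Qed.
Lemma Y'_big : eps * #|Y|%:R < #|Y'|%:R.
Proof. apply: le_lt_trans bY; rewrite ler_wpM2r ?ler0n //; exact: eps_le_c. Qed.

Lemma Lreg (A C : {set V}) : A \subset X -> C \subset Y ->
  eps * #|X|%:R <= #|A|%:R -> eps * #|Y|%:R <= #|C|%:R ->
  (d - eps) * (#|A| * #|C|)%:R <= (n_edges e A C)%:R.
Proof.
move=> sA sC hA hC; have := reg sA sC hA hC; rewrite ler_norml => /andP[h _].
have Apos : (0 < #|A|)%N.
  rewrite -(ltr0n R); apply: lt_le_trans hA; rewrite mulr_gt0 // ltr0n; exact: X_pos.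
have Cpos : (0 < #|C|)%N.
  rewrite -(ltr0n R); apply: lt_le_trans hC; rewrite mulr_gt0 // ltr0n; exact: Y_pos.
have : d - eps <= density R e A C by move: h; rewrite -/d; lra.
by rewrite /density ler_pdivlMr // ltr0n muln_gt0 Apos.
Qed.

Lemma bad_small :
  #|[set x in X' | ~~ (3 * eps * #|Y|%:R < #|[set y in Y' | e x y]|%:R)]|%:R
    < eps * #|X|%:R.
Proof.
set Bad := [set x in X' | _].
rewrite real_ltNge ?num_real //; apply/negP => hB.
have sB : Bad \subset X.
  by apply: subset_trans sX'; apply/subsetP => x; rewrite inE => /andP[].
have := Lreg sB sY' hB (ltW Y'_big).
rewrite n_edges_sum natr_sum.
have : \sum_(x in Bad) #|[set y in Y' | e x y]|%:R <= \sum_(x in Bad) (3 * eps * #|Y|%:R).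
  by apply: ler_sum => x; rewrite inE => /andP[_]; rewrite -real_leNgt ?num_real.
rewrite sumr_const => h1 h2.
have {h1 h2} : (d - eps) * (#|Bad|%:R * #|Y'|%:R) <= 3 * eps * #|Y|%:R * #|Bad|%:R.
  by rewrite -natrM; move: h1; rewrite -[_ *+ #|Bad|]mulr_natr => h1; exact: le_trans h2 h1.
have Bpos : 0 < #|Bad|%:R :> R.
  apply: lt_le_trans hB; rewrite mulr_gt0 // ltr0n; exact: X_pos.
move: bY; rewrite -/k => bY' h.
have h3 : (d - eps) * #|Y'|%:R <= 3 * eps * #|Y|%:R.
  rewrite -(ler_pM2r Bpos); move: h; rewrite mulrCA mulrC; by [].
have y0 : 0 <= #|Y|%:R :> R by rewrite ler0n.
have dd : 3 * alpha < d := dens.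
have e0 := eps_gt0; have ea := ealpha; have k0 := k_pos; have hk' := hk.
have de : 0 < d - eps by lra.
have h4 : (d - eps) * (2 * k * #|Y|%:R) < (d - eps) * #|Y'|%:R by rewrite ltr_pM2l.
have k1 : 2 * k < 1.
  have : 2 * k * alpha < alpha by rewrite -mulrA hk'; lra.
  by rewrite -[X in _ < X -> _]mul1r ltr_pM2r.
have h5 : 5 * eps <= (d - eps) * (2 * k) by nra.
have h6 : 5 * eps * #|Y|%:R <= (d - eps) * (2 * k * #|Y|%:R).
  by rewrite mulrA ler_wpM2r.
nra.
Qed.

Lemma Z_small (C : {set V}) : C \subset Y -> eps * #|Y|%:R <= #|C|%:R ->
  #|[set x in X | [forall y in C, ~~ e x y]]|%:R < eps * #|X|%:R.
Proof.
move=> sC hC; set Z := [set x in X | _].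
rewrite real_ltNge ?num_real //; apply/negP => hZ.
have sZ : Z \subset X by apply/subsetP => x; rewrite inE => /andP[].
have := Lreg sZ sC hZ hC.
have -> : n_edges e Z C = 0%N.
  apply/eqP; rewrite cards_eq0; apply/eqP/setP => -[x y]; rewrite !inE /=.
  apply/negP => /andP[/andP[/andP[_ /forallP/(_ y)/implyP h] yC] exy].
  by move: exy; rewrite (negbTE (h yC)).
have Zpos : 0 < #|Z|%:R :> R.
  apply: lt_le_trans hZ; rewrite mulr_gt0 // ltr0n; exact: X_pos.
have Cpos : 0 < #|C|%:R :> R.
  apply: lt_le_trans hC; rewrite mulr_gt0 // ltr0n; exact: Y_pos.
rewrite natrM; move=> h.
have dd : 3 * alpha < d := dens.
have : 0 < (d - eps) * (#|Z|%:R * #|C|%:R) by rewrite !mulr_gt0 //; move: eps_gt0 ealpha; lra.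
lra.
Qed.

End Reg.
Section Tree.
Variables (VT : finType) (eT : rel VT).
Hypotheses (sym : symmetric eT) (acyc : acyclic_graph eT).

Definition restr (S : {set VT}) := [rel a b | (a \in S) && (b \in S) && eT a b].
Definition sconn (S : {set VT}) :=
  forall a b, a \in S -> b \in S -> connect (restr S) a b.

Lemma path_restr_in S x p : path (restr S) x p -> all (mem S) p.
Proof.
elim: p x => //= y p IH x /andP[/andP[/andP[_ yS] _] pp].
by rewrite [y \in _]yS /= (IH y).
Qed.

Lemma unique_nbr S v u u' : sconn S -> v \notin S -> u \in S -> u' \in S ->
  eT u v -> eT u' v -> u' = u.
Proof.
move=> cS vS uS u'S euv eu'v; apply/eqP; apply/negPn/negP => ne.
have /connectP[p pp lp] := cS u u' uS u'S.
case: (shortenP pp) lp => p' pp' up' _ lp.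
have pS := path_restr_in pp'.
have vp : v \notin u :: p'.
  rewrite inE negb_or; apply/andP; split; first by apply: contraNneq vS => ->.
  by apply/negP => /(allP pS) /= => /(negP vS).
have us : uniq (v :: u :: p') by rewrite cons_uniq vp up'.
have := acyc us.
case: p' pp' up' pS vp lp us => [|w p'] pp' up' pS vp lp us.
  by rewrite /= in lp; rewrite lp eqxx in ne.
move=> /(_ isT) /negP; apply; rewrite /= sym euv /=.
rewrite -cats1 cat_path /= andbT.
have /= /andP[-> ->] : path eT u (w :: p') by apply: sub_path pp' => a b /andP[].
by rewrite /= in lp; rewrite -lp eu'v.
Qed.

Lemma sconn1 x : sconn [set x].
Proof. by move=> a b; rewrite !inE => /eqP-> /eqP->; exact: connect0. Qed.

Lemma sconn_add S u v : sconn S -> u \in S -> eT u v -> sconn (v |: S).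
Proof.
move=> cS uS euv.
have sub : forall a b, a \in S -> b \in S -> connect (restr (v |: S)) a b.
  move=> a b aS bS; apply: connect_sub (cS a b aS bS) => x y /= /andP[/andP[xS yS] exy].
  by apply: connect1; rewrite /restr /= !inE xS yS !orbT.
have uv : connect (restr (v |: S)) u v by apply: connect1; rewrite /restr /= !inE uS eqxx orbT.
have vu : connect (restr (v |: S)) v u by apply: connect1; rewrite /restr /= !inE uS eqxx orbT sym.
move=> a b; rewrite !inE => /orP[/eqP->|aS] /orP[/eqP->|bS].
- exact: connect0.
- exact: connect_trans vu (sub _ _ uS bS).
- exact: connect_trans (sub _ _ aS uS) uv.
- exact: sub.
Qed.

End Tree.
Section Count.
Variable R : realFieldType.

Lemma card_cover (T : finType) (N B Z U : {set T}) :
  N \subset B :|: Z :|: U -> #|N|%:R <= #|B|%:R + #|Z|%:R + #|U|%:R :> R.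
Proof.
move=> sN; rewrite -!natrD ler_nat; apply: leq_trans (subset_leq_card sN) _.
apply: leq_trans (leq_card_setU _ _) _; rewrite leq_add2r; exact: leq_card_setU.
Qed.

Lemma pick_out (T : finType) (N B Z U : {set T}) (s : R) :
  3 * s < #|N|%:R -> #|B|%:R < s -> #|Z|%:R < s -> #|U|%:R < s ->
  exists y, [/\ y \in N, y \notin B, y \notin Z & y \notin U].
Proof.
move=> hN hB hZ hU.
case: (boolP [exists y, [&& y \in N, y \notin B, y \notin Z & y \notin U]]).
  by move=> /existsP[y /and4P[]]; exists y.
move=> /existsPn H; have : N \subset B :|: Z :|: U.
  apply/subsetP => y yN; move: (H y); rewrite yN /= !inE.
  by case: (y \in B); case: (y \in Z); case: (y \in U).
move/card_cover => h; lra.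
Qed.

Lemma rest_big (T : finType) (N C B U : {set T}) (s : R) :
  N \subset C :|: B :|: U -> 3 * s < #|N|%:R -> #|B|%:R < s -> #|U|%:R < s ->
  s <= #|C|%:R.
Proof. move/card_cover => h hN hB hU; lra. Qed.

End Count.
Section Main.
Variables (R : realFieldType) (VT : finType) (eT : rel VT) (F1 F2 Rs : {set VT})
  (V : finType) (e : rel V) (X Y X' Y' : {set V}) (eps : R) (phi : VT -> V).
Hypotheses (symT : symmetric eT) (irrT : irreflexive eT) (acyc : acyclic_graph eT)
  (F12 : F1 :&: F2 = set0) (F1u2 : F1 :|: F2 = setT)
  (colE : forall u v, eT u v -> (u \in F1) && (v \in F2) || (u \in F2) && (v \in F1))
  (RsF1 : Rs \subset F1) (se : symmetric e) (dXY : [disjoint X & Y])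
  (sX' : X' \subset X) (sY' : Y' \subset Y).

Let s := eps * #|X|%:R.
Let t := eps * #|Y|%:R.

Definition goodX (x : V) := (x \in X') && (3 * eps * #|Y|%:R < #|[set y in Y' | e x y]|%:R).
Definition goodY (y : V) := (y \in Y') && (3 * eps * #|X|%:R < #|[set x in X' | e y x]|%:R).
Definition BadX := [set x in X' | ~~ (3 * eps * #|Y|%:R < #|[set y in Y' | e x y]|%:R)].
Definition BadY := [set y in Y' | ~~ (3 * eps * #|X|%:R < #|[set x in X' | e y x]|%:R)].
Definition good (v : VT) (y : V) := if v \in F1 then goodX y else goodY y.

Hypotheses (hF1 : #|F1|%:R <= s) (hF2 : #|F2|%:R <= t)
  (hBX : #|BadX|%:R < s) (hBY : #|BadY|%:R < t)
  (hZ : forall C : {set V}, C \subset Y -> t <= #|C|%:R ->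
          #|[set x in X | [forall y in C, ~~ e x y]]|%:R < s)
  (hphi : forall r, r \in Rs -> goodX (phi r))
  (phi_inj : {in Rs &, injective phi}).

Lemma F1orF2 x : (x \in F1) || (x \in F2).
Proof. by rewrite -in_setU F1u2 inE. Qed.

Lemma F1F2 x : x \in F1 -> x \notin F2.
Proof. move=> h; apply/negP => h2. have : x \in F1 :&: F2 by rewrite inE h h2. by rewrite F12 inE. Qed.

Lemma F2F1 x : x \in F2 -> x \notin F1.
Proof. by apply: contraTN => /F1F2. Qed.

Lemma XnY y : y \in X -> y \notin Y.
Proof. by move=> yX; rewrite (disjointFr dXY yX). Qed.

Lemma goodF1 v y : v \in F1 -> good v y -> goodX y.
Proof. by rewrite /good => ->. Qed.
Lemma goodF2 v y : v \in F2 -> good v y -> goodY y.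
Proof. by rewrite /good => /F2F1/negbTE ->. Qed.

Lemma goodX_X y : goodX y -> y \in X.
Proof. by case/andP => /(subsetP sX'). Qed.
Lemma goodY_Y y : goodY y -> y \in Y.
Proof. by case/andP => /(subsetP sY'). Qed.

Definition valid (S : {set VT}) (psi : VT -> V) :=
  [/\ sconn eT S,
      forall x, x \in S :|: Rs -> good x (psi x),
      {in S :|: Rs &, injective psi},
      {in Rs, psi =1 phi} &
      forall u v, u \in S -> v \in S -> eT u v -> e (psi u) (psi v)].

Lemma img_F1 S psi : valid S psi -> psi @: ((S :|: Rs) :&: F1) \subset X.
Proof.
case=> _ hg _ _ _; apply/subsetP => y /imsetP[x]; rewrite inE => /andP[xS xF ->].
exact/goodX_X/(goodF1 xF)/hg.
Qed.
Lemma img_F2 S psi : valid S psi -> psi @: ((S :|: Rs) :&: F2) \subset Y.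
Proof.
case=> _ hg _ _ _; apply/subsetP => y /imsetP[x]; rewrite inE => /andP[xS xF ->].
exact/goodY_Y/(goodF2 xF)/hg.
Qed.

Lemma notin_img S psi y : valid S psi ->
  y \notin psi @: ((S :|: Rs) :&: F1) -> y \notin psi @: ((S :|: Rs) :&: F2) ->
  y \notin psi @: (S :|: Rs).
Proof.
move=> _ h1 h2; apply/imsetP => -[x xS yx].
case/orP: (F1orF2 x) => xF.
  by move/negP: h1; apply; apply/imsetP; exists x; rewrite // inE xS.
by move/negP: h2; apply; apply/imsetP; exists x; rewrite // inE xS.
Qed.

Lemma edges_add S psi psi' u v :
  sconn eT S -> v \notin S -> u \in S -> eT u v ->
  (forall a b, a \in S -> b \in S -> eT a b -> e (psi a) (psi b)) ->
  {in S, psi' =1 psi} -> e (psi' u) (psi' v) ->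
  forall a b, a \in v |: S -> b \in v |: S -> eT a b -> e (psi' a) (psi' b).
Proof.
move=> cS vS uS euv hE eq euv' a b; rewrite !inE.
move=> /orP[/eqP->|aS] /orP[/eqP->|bS].
- by rewrite irrT.
- move=> evb; have ebv : eT b v by rewrite symT.
  have bu := unique_nbr symT acyc cS vS uS bS euv ebv.
  by rewrite bu se.
- move=> eav; have au := unique_nbr symT acyc cS vS uS aS euv eav.
  by rewrite au.
- by move=> eab; rewrite !eq //; apply: hE.
Qed.

Definition upd (psi : VT -> V) v y := fun x => if x == v then y else psi x.

Lemma add_vertex S psi u v y : valid S psi -> u \in S -> v \notin S -> v \notin Rs ->
  eT u v -> e (psi u) y -> good v y -> y \notin psi @: (S :|: Rs) ->
  valid (v |: S) (upd psi v y).
Proof.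
move=> [cS hg hi hR hE] uS vS vR euv ey gy ny; split.
- exact: sconn_add cS uS euv.
- move=> x; rewrite /upd; case: eqP => [->//|/eqP xv].
  by rewrite !inE (negbTE xv) /= -in_setU; apply: hg.
- have H : forall a, a \in v |: S :|: Rs -> a != v -> a \in S :|: Rs.
    by move=> a; rewrite !inE => /orP[/orP[/eqP->|->]|->]; rewrite ?eqxx ?orbT.
  move=> a b ha hb; rewrite /upd.
  case: eqP => [av|/eqP av]; case: eqP => [bv|/eqP bv].
  + by rewrite av bv.
  + by move=> yb; move/negP: ny; case; apply/imsetP; exists b => //; apply: H.
  + by move=> ay; move/negP: ny; case; apply/imsetP; exists a => //; apply: H.
  + by apply: hi; apply: H.
- move=> r rR; rewrite /upd; case: eqP => [rv|_]; last exact: hR.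
  by move: vR; rewrite -rv rR.
- apply: (edges_add cS vS uS euv hE).
    by move=> x xS; rewrite /upd; case: eqP => // xv; move: vS; rewrite -xv xS.
  rewrite /upd eqxx; case: eqP => // uv; move: vS; rewrite -uv uS //.
Qed.

Lemma add_reserved S psi u v : valid S psi -> u \in S -> v \notin S -> v \in Rs ->
  eT u v -> e (psi u) (psi v) -> valid (v |: S) psi.
Proof.
move=> [cS hg hi hR hE] uS vS vR euv ey.
have EQ : v |: S :|: Rs = S :|: Rs.
  by apply/setP => x; rewrite !inE; case: eqP => // ->; rewrite vR !orbT.
split; rewrite ?EQ //.
- exact: sconn_add cS uS euv.
- exact: (edges_add cS vS uS euv hE).
Qed.

Lemma card_rest S v (F : {set VT}) : v \in F -> v \notin S :|: Rs ->
  (#|(S :|: Rs) :&: F| < #|F|)%N.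
Proof.
move=> vF vS; apply: proper_card; apply/properP; split.
  by apply/subsetP => x; rewrite inE => /andP[].
by exists v => //; rewrite inE (negbTE vS).
Qed.

Lemma img_small (S : {set VT}) (psi : VT -> V) v (F : {set VT}) (c : R) : v \in F -> v \notin S :|: Rs ->
  #|F|%:R <= c -> #|psi @: ((S :|: Rs) :&: F)|%:R < c.
Proof.
move=> vF vS hc; apply: lt_le_trans hc; rewrite ltr_nat.
exact: leq_ltn_trans (leq_imset_card _ _) (card_rest vF vS).
Qed.

Lemma greedy S psi u v : valid S psi -> u \in S -> v \notin S -> v \notin Rs -> eT u v ->
  exists y, [/\ e (psi u) y, good v y & y \notin psi @: (S :|: Rs)].
Proof.
move=> hv uS vS vR euv.
have vSR : v \notin S :|: Rs by rewrite inE negb_or vS.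
have i1 := img_F1 hv; have i2 := img_F2 hv.
have gu : good u (psi u) by case: hv => _ hg _ _ _; apply: hg; rewrite inE uS.
case/orP: (colE euv) => /andP[uF vF].
- have gX := goodF1 uF gu; case/andP: gX => _; rewrite -mulrA => hN.
  have h0 : #|(set0 : {set V})|%:R < t.
    by rewrite cards0; apply: le_lt_trans hBY; rewrite ler0n.
  have [y [yN yB _ yU]] := pick_out hN hBY h0
    (img_small psi vF vSR hF2).
  move: yN; rewrite inE => /andP[yY' ey].
  have gy : goodY y by move: yB; rewrite inE yY' /= negbK /goodY yY'.
  exists y; split => //; first by rewrite /good (negbTE (F2F1 vF)).
  apply: notin_img hv _ yU; apply/negP => /(subsetP i1) /XnY.
  by rewrite (subsetP sY') .
- have gY := goodF2 uF gu; case/andP: gY => _; rewrite -mulrA => hN.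
  have h0 : #|(set0 : {set V})|%:R < s.
    by rewrite cards0; apply: le_lt_trans hBX; rewrite ler0n.
  have [y [yN yB _ yU]] := pick_out hN hBX h0
    (img_small psi vF vSR hF1).
  move: yN; rewrite inE => /andP[yX' ey].
  have gy : goodX y by move: yB; rewrite inE yX' /= negbK /goodX yX'.
  exists y; split => //; first by rewrite /good vF.
  apply: notin_img hv yU _; apply/negP => /(subsetP i2).
  by apply/negP/XnY; rewrite (subsetP sX').
Qed.


Lemma col12 u v : eT u v -> u \in F1 -> v \in F2.
Proof.
move=> /colE /orP[/andP[_ //]|/andP[uF _]] u1.
by move: (F1F2 u1); rewrite uF.
Qed.
Lemma col21 u v : eT u v -> u \in F2 -> v \in F1.
Proof.
move=> /colE /orP[/andP[uF _]|/andP[_ //]] u2.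
by move: (F2F1 u2); rewrite uF.
Qed.

Lemma connect_step S psi u q p r2 : valid S psi -> u \in S -> q \notin S -> q \notin Rs ->
  eT u q -> p \notin S -> p \notin Rs -> eT q p -> r2 \in Rs -> r2 \notin S -> eT p r2 ->
  q \in F1 -> p \in F2 ->
  exists psi', valid (r2 |: (p |: (q |: S))) psi'.
Proof.
move=> hv uS qS qR euq pS pR eqp r2R r2S epr qF pF.
have i1 := img_F1 hv; have i2 := img_F2 hv.
have uF : u \in F2 by rewrite symT in euq; apply: col12 euq qF.
have hg : forall x, x \in S :|: Rs -> good x (psi x) by case: hv.
have gu : goodY (psi u) by apply: (goodF2 uF); apply: hg; rewrite inE uS.
have gr : goodX (psi r2).
  by apply: (goodF1 (subsetP RsF1 _ r2R)); apply: hg; rewrite inE r2R orbT.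
set U2 := psi @: ((S :|: Rs) :&: F2).
set C2 := [set y in Y' | e (psi r2) y && (y \notin BadY) && (y \notin U2)].
have pSR : p \notin S :|: Rs by rewrite inE negb_or pS.
have qSR : q \notin S :|: Rs by rewrite inE negb_or qS.
have hU2 : #|U2|%:R < t := img_small psi pF pSR hF2.
have hC2 : t <= #|C2|%:R.
  case/andP: gr => _; rewrite -mulrA => hN.
  apply: (rest_big (N := [set y in Y' | e (psi r2) y]) (B := BadY) (U := U2)) _ hN hBY hU2.
  apply/subsetP => y yN; rewrite !in_setU.
  case: (boolP (y \in BadY)) => yB; case: (boolP (y \in U2)) => yU; rewrite ?orbT //.
  rewrite !orbF inE; move: yN; rewrite inE => /andP[-> ->]; by rewrite yB yU.
have sC2 : C2 \subset Y.
  by apply: subset_trans sY'; apply/subsetP => y; rewrite inE => /andP[].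
have hZ2 := hZ sC2 hC2.
have hU1 : #|psi @: ((S :|: Rs) :&: F1)|%:R < s := img_small psi qF qSR hF1.
case/andP: gu => _; rewrite -mulrA => hNu.
have [qq [qqN qqB qqZ qqU]] := pick_out hNu hBX hZ2 hU1.
move: qqN; rewrite inE => /andP[qqX' eqq].
have gqq : goodX qq by move: qqB; rewrite inE qqX' /= negbK /goodX qqX'.
have qqX : qq \in X := subsetP sX' _ qqX'.
have [pp ppC eqp'] : exists2 pp, pp \in C2 & e qq pp.
  move: qqZ; rewrite inE qqX /= => /forallPn[y]; rewrite negb_imply negbK => /andP[yC ey].
  by exists y.
move: ppC; rewrite [pp \in C2]inE => /andP[ppY' /andP[/andP[erpp ppB] ppU]].
have gpp : goodY pp by move: ppB; rewrite inE ppY' /= negbK /goodY ppY'.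
have ppY : pp \in Y := subsetP sY' _ ppY'.
have ny1 : qq \notin psi @: (S :|: Rs).
  apply: notin_img hv qqU _; apply/negP => /(subsetP i2).
  by rewrite (negbTE (XnY qqX)).
have gq : good q qq by rewrite /good qF.
have hv1 := add_vertex hv uS qS qR euq eqq gq ny1.
have qS1 : q \in q |: S by rewrite setU11.
have pq : p != q by apply: contraTneq eqp => ->; rewrite irrT.
have pS1 : p \notin q |: S by rewrite !inE negb_or pS pq.
have e1 : e (upd psi q qq q) pp by rewrite /upd eqxx.
have i1' := img_F1 hv1.
have ny2 : pp \notin (upd psi q qq) @: ((q |: S) :|: Rs).
  apply: (notin_img hv1).
    apply/negP => /(subsetP i1') /XnY; by rewrite ppY.
  apply/imsetP => -[x]; rewrite !inE => /andP[xS xF] ppx.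
  have xq : x != q by apply: contraTneq xF => ->; rewrite (F1F2 qF).
  move: ppx; rewrite /upd (negbTE xq) => ppx.
  move/negP: ppU; apply; apply/imsetP; exists x => //.
  rewrite !inE xF andbT; move: xS; by rewrite (negbTE xq).
have gp : good p pp by rewrite /good (negbTE (F2F1 pF)).
have hv2 := add_vertex hv1 qS1 pS1 pR eqp e1 gp ny2.
have pS2 : p \in p |: (q |: S) by rewrite setU11.
have r2p : r2 != p by apply: contraTneq epr => ->; rewrite irrT.
have r2q : r2 != q by apply: contraTneq r2R => ->.
have r2S2 : r2 \notin p |: (q |: S) by rewrite !inE negb_or r2p negb_or r2q r2S.
have e2 : e (upd (upd psi q qq) p pp p) (upd (upd psi q qq) p pp r2).
  by rewrite /upd eqxx (negbTE r2p) (negbTE r2q) se.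
by exists (upd (upd psi q qq) p pp); apply: add_reserved hv2 pS2 r2S2 r2R epr e2.
Qed.


Lemma cross_edge (S : {set VT}) x y : x \in S -> y \notin S -> connect eT x y ->
  exists u v, [/\ u \in S, v \notin S & eT u v].
Proof.
move=> xS yS cxy.
case: (boolP [exists u, exists v, [&& u \in S, v \notin S & eT u v]]).
  by move=> /existsP[u /existsP[v /and3P[]]] uS vS euv; exists u, v.
move=> /existsPn H.
have : (x \in S) = (y \in S).
  apply: (closed_connect _ cxy) => a b eab.
  case: (boolP (a \in S)) => aS; case: (boolP (b \in S)) => bS //.
    by move: (H a) => /existsPn/(_ b); rewrite aS bS eab.
  by move: (H b) => /existsPn/(_ a); rewrite aS bS symT eab.
by rewrite xS (negbTE yS).
Qed.

Lemma card_shrink (S : {set VT}) v : v \notin S -> (#|~: (v |: S)| < #|~: S|)%N.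
Proof.
move=> vS; apply: proper_card; apply/properP; split.
  by apply/subsetP => z; rewrite !inE negb_or => /andP[].
by exists v; rewrite !inE ?eqxx.
Qed.

Lemma not_setT (S : {set VT}) : S != setT -> exists y, y \notin S.
Proof.
move=> neS; case: (boolP [exists y, y \notin S]) => [/existsP//|/existsPn H].
by move/eqP: neS; case; apply/setP => z; rewrite inE; move: (H z); rewrite negbK.
Qed.

Hypothesis connT : forall x y, connect eT x y.

Lemma phaseB n : forall S psi, (#|~: S| <= n)%N -> valid S psi -> Rs \subset S ->
  (exists x, x \in S) -> exists psi', valid setT psi'.
Proof.
elim: n => [|n IH] S psi hn hv hRS [x xS].
  have eS : S = setT.
    apply/setP => z; rewrite inE; apply/negPn/negP => zS.
    by move: hn; rewrite leqn0 cards_eq0 => /eqP /setP /(_ z); rewrite !inE zS.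
  by exists psi; rewrite -eS.
case: (boolP (S == setT)) => [/eqP eS|neS]; first by exists psi; rewrite -eS.
have [y yS] := not_setT neS.
have [u [v [uS vS euv]]] := cross_edge xS yS (connT x y).
have vR : v \notin Rs by apply: contraNN vS; apply: (subsetP hRS).
have [z [ez gz nz]] := greedy hv uS vS vR euv.
have hv' := add_vertex hv uS vS vR euv ez gz nz.
apply: (IH _ _ _ hv').
- by rewrite -ltnS; apply: leq_trans (card_shrink vS) hn.
- by apply: subset_trans hRS (subsetUr _ _).
- by exists v; rewrite setU11.
Qed.

Variables (r1 r2 : VT).
Hypotheses (hRs2 : forall r, r \in Rs -> (r == r1) || (r == r2)) (r2R : r2 \in Rs).

Definition inD x := [|| x == r2, eT x r2 | [exists p, eT x p && eT p r2]].

Lemma phaseA n : forall S psi, (#|~: S| <= n)%N -> valid S psi -> r1 \in S ->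
  (forall x, x \in S -> ~~ inD x) ->
  exists S' psi', [/\ valid S' psi', r1 \in S' & r2 \in S'].
Proof.
have r2D : inD r2 by rewrite /inD eqxx.
elim: n => [|n IH] S psi hn hv r1S hD.
  have : r2 \in S.
    apply/negPn/negP => zS.
    by move: hn; rewrite leqn0 cards_eq0 => /eqP /setP /(_ r2); rewrite !inE zS.
  by move/hD; rewrite r2D.
have r2S : r2 \notin S by apply/negP => /hD; rewrite r2D.
have [u [v [uS vS euv]]] := cross_edge r1S r2S (connT r1 r2).
have vr1 : v != r1 by apply: contraNneq vS => ->.
have uD := hD u uS.
have r2F1 : r2 \in F1 := subsetP RsF1 _ r2R.
case: (boolP (inD v)) => vD.
  case: (eqVneq v r2) => [vr2|vr2].
    by move: uD; rewrite /inD -vr2 euv orbT.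
  case: (boolP (eT v r2)) => evr2.
    by move: uD; rewrite /inD => /norP[_ /norP[_ /existsPn/(_ v)]]; rewrite euv evr2.
  move: vD; rewrite /inD (negbTE vr2) (negbTE evr2) /= => /existsP[p /andP[evp epr]].
  have vR : v \notin Rs by apply/negP => /hRs2; rewrite (negbTE vr1) (negbTE vr2).
  have pF : p \in F2 by rewrite symT in epr; apply: col12 epr r2F1.
  have pS : p \notin S by apply/negP => /hD; rewrite /inD epr orbT.
  have pR : p \notin Rs by apply: contraTN pF => /(subsetP RsF1)/F1F2.
  have vF : v \in F1 by rewrite symT in evp; apply: col21 evp pF.
  have [psi' hv'] := connect_step hv uS vS vR euv pS pR evp r2R r2S epr vF pF.
  by exists (r2 |: (p |: (v |: S))), psi'; split; rewrite // !inE ?r1S ?eqxx ?orbT.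
have vR : v \notin Rs.
  by apply/negP => /hRs2 /orP[/eqP vr|/eqP vr]; [move: vr1; rewrite vr eqxx | move: vD; rewrite vr r2D].
have [z [ez gz nz]] := greedy hv uS vS vR euv.
have hv' := add_vertex hv uS vS vR euv ez gz nz.
apply: (IH _ _ _ hv').
- by rewrite -ltnS; apply: leq_trans (card_shrink vS) hn.
- by rewrite inE r1S orbT.
- by move=> x; rewrite !inE => /orP[/eqP->//|]; apply: hD.
Qed.

End Main.

Lemma densityC (R : realFieldType) (V : finType) (e : rel V) (A B : {set V}) :
  symmetric e -> density R e A B = density R e B A.
Proof. by move=> se; rewrite /density n_edgesC // mulnC. Qed.

Lemma eps_regularC (R : realFieldType) (V : finType) (e : rel V) (eps : R) (A B : {set V}) :
  symmetric e -> eps_regular e eps A B -> eps_regular e eps B A.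
Proof.
move=> se h B1 A1 sB sA hB hA; rewrite densityC // [density R e B A]densityC //.
exact: h.
Qed.

Lemma exists_notin (T : finType) (A B : {set T}) (R : realFieldType) :
  #|A|%:R < #|B|%:R :> R -> exists2 y, y \in B & y \notin A.
Proof.
rewrite ltr_nat => h; case: (boolP (B \subset A)) => [/subset_leq_card|/subsetPn//].
by rewrite leqNgt h.
Qed.

Section Final.
Variables (R : realFieldType)
    (VT : finType) (eT : rel VT) (F1 F2 Rs : {set VT})
    (V : finType) (e : rel V) (X Y X' Y' : {set V})
    (eps alpha : R) (phi : VT -> V).
Hypotheses (tree : is_tree eT) (col : colour_classes eT F1 F2)
  (RsF1 : Rs \subset F1) (Rs2 : (#|Rs| <= 2)%N)
  (Rsnc : #|Rs| = 2%N -> forall r1 r2 w, r1 \in Rs -> r2 \in Rs -> r1 != r2 ->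
      ~~ (eT r1 w && eT r2 w))
  (eps0 : 0 < eps) (ealpha : 2 * eps < alpha)
  (sg : simple_graph e) (dXY : [disjoint X & Y])
  (reg : eps_regular e eps X Y) (dens : 3 * alpha < density R e X Y)
  (hF1 : #|F1|%:R <= eps * #|X|%:R) (hF2 : #|F2|%:R <= eps * #|Y|%:R)
  (sX' : X' \subset X) (sY' : Y' \subset Y)
  (bX : 2 * (eps / alpha) * #|X|%:R < #|X'|%:R)
  (bY : 2 * (eps / alpha) * #|Y|%:R < #|Y'|%:R)
  (phi_inj : {in Rs &, injective phi})
  (hphi : forall r, r \in Rs ->
     phi r \in X' /\ 3 * eps * #|Y|%:R < #|[set y in Y' | e (phi r) y]|%:R).

Lemma final : exists psi : VT -> V,
    [/\ injective psi, {in Rs, psi =1 phi},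
        (forall v, psi v \in X :|: Y),
        (forall u v, eT u v -> e (psi u) (psi v)) &
        (psi @: F1 \subset X') && (psi @: F2 \subset Y')].
Proof.
case: tree => [[symT irrT] VTpos connT acyc].
case: col => [F12 F1u2 colE].
case: sg => [se irre].
have hBX := bad_small eps0 ealpha reg dens sX' sY' bX bY.
have densC : 3 * alpha < density R e Y X by rewrite densityC.
have hBY := bad_small eps0 ealpha (eps_regularC se reg) densC sY' sX' bY bX.
have hZ := Z_small eps0 ealpha reg dens sX' sY' bX bY.
have hX'b := X'_big eps0 ealpha dens bX.
have hY'b := X'_big eps0 ealpha densC bY.
have gphi : forall r, r \in Rs -> goodX e Y X' Y' eps (phi r).
  by move=> r rR; case: (hphi rR) => h1 h2; rewrite /goodX h1 h2.
suff [psi [_ hg hi hR hE]] : exists psi, valid eT F1 Rs e X Y X' Y' eps phi setT psi.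
  exists psi; split => //.
  - by move=> a b; apply: hi; rewrite in_setU in_setT.
  - move=> v; have vin : v \in setT :|: Rs by rewrite in_setU in_setT.
    have := hg v vin; case/orP: (F1orF2 F1u2 v) => vF.
      by move/(goodF1 vF)/(goodX_X sX'); rewrite inE => ->.
    by move/(goodF2 F12 vF)/(goodY_Y sY'); rewrite inE => ->; rewrite orbT.
  - by move=> u v; apply: hE; rewrite in_setT.
  - apply/andP; split.
      apply/subsetP => y /imsetP[x xF ->].
      have xin : x \in setT :|: Rs by rewrite in_setU in_setT.
      by have := hg x xin; move/(goodF1 xF)/andP => [].
    apply/subsetP => y /imsetP[x xF ->].
    have xin : x \in setT :|: Rs by rewrite in_setU in_setT.
    by have := hg x xin; move/(goodF2 F12 xF)/andP => [].
case: (set_0Vmem Rs) => [R0|[r1 r1R]].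
  have [x0 _] : exists x0 : VT, True.
    by move/card_gt0P: VTpos => [x0 _]; exists x0.
  have [y0 gy0] : exists y0, good F1 e X Y X' Y' eps x0 y0.
    rewrite /good; case: (x0 \in F1).
      have [y yX' yB] := exists_notin (lt_trans hBX hX'b).
      by exists y; move: yB; rewrite inE yX' /= negbK /goodX yX'.
    have [y yY' yB] := exists_notin (lt_trans hBY hY'b).
    by exists y; move: yB; rewrite inE yY' /= negbK /goodY yY'.
  apply: (phaseB symT irrT acyc F12 F1u2 colE se dXY sX' sY' hF1 hF2 hBX hBY connT (leqnn _) (_ : valid eT F1 Rs e X Y X' Y' eps phi [set x0] (fun _ => y0))) => //.
  - split.
    + exact: sconn1.
    + by move=> x; rewrite R0 setU0 inE => /eqP->.
    + by move=> a b; rewrite R0 setU0 !inE => /eqP-> /eqP->.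
    + by move=> r; rewrite R0 inE.
    + by move=> a b; rewrite !inE => /eqP-> /eqP->; rewrite irrT.
  - by rewrite R0 sub0set.
  - by exists x0; rewrite inE.
have v1 : valid eT F1 Rs e X Y X' Y' eps phi [set r1] phi.
  have E1 : [set r1] :|: Rs = Rs.
    by apply/setP => x; rewrite !inE; case: eqP => // ->; rewrite r1R.
  split; rewrite ?E1 //.
  - exact: sconn1.
  - by move=> x xR; rewrite /good (subsetP RsF1 _ xR); apply: gphi.
  - by move=> a b; rewrite !inE => /eqP-> /eqP->; rewrite irrT.
have cD := cardsD1 r1 Rs; rewrite r1R /= add1n in cD.
have : (#|Rs :\ r1| <= 1)%N by rewrite -ltnS -cD.
rewrite leq_eqVlt ltnS leqn0 => /orP[/cards1P[r2 Er2]|/eqP /cards0_eq E0].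
- have r2D : r2 \in Rs :\ r1 by rewrite Er2 inE.
  have r2R : r2 \in Rs by move: r2D; rewrite !inE => /andP[_ ->].
  have r21 : r2 != r1 by move: r2D; rewrite !inE => /andP[-> _].
  have hRs2 : forall r, r \in Rs -> (r == r1) || (r == r2).
    move=> r rR; case: (eqVneq r r1) => //= rr1.
    have : r \in Rs :\ r1 by rewrite !inE rr1.
    by rewrite Er2 inE.
  have c2 : #|Rs| = 2%N by rewrite cD Er2 cards1.
  have nD : ~~ inD eT r2 r1.
    rewrite /inD eq_sym (negbTE r21) /=; apply/norP; split.
      apply/negP => e12; have := col12 F12 colE e12 (subsetP RsF1 _ r1R).
      by move/(F2F1 F12); rewrite (subsetP RsF1 _ r2R).
    apply/existsPn => p; apply/negP => /andP[e1p ep2].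
    have r12 : r1 != r2 by rewrite eq_sym.
    by move/negP: (Rsnc c2 p r1R r2R r12); apply; rewrite e1p symT ep2.
  have hD1 : forall x, x \in [set r1] -> ~~ inD eT r2 x by move=> x; rewrite inE => /eqP->.
  have [S' [psi' [hv' r1S' r2S']]] := phaseA symT irrT acyc F12 F1u2 colE RsF1 se dXY
    sX' sY' hF1 hF2 hBX hBY hZ connT hRs2 r2R (leqnn _) v1 (set11 r1) hD1.
  apply: (phaseB symT irrT acyc F12 F1u2 colE se dXY sX' sY' hF1 hF2 hBX hBY connT (leqnn _) hv').
    by apply/subsetP => r /hRs2 /orP[/eqP->|/eqP->].
  by exists r1.
- apply: (phaseB symT irrT acyc F12 F1u2 colE se dXY sX' sY' hF1 hF2 hBX hBY connT (leqnn _) v1).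
    apply/subsetP => r rR; rewrite inE; apply/negPn/negP => rr1.
    have : r \in Rs :\ r1 by rewrite !inE rr1.
    by rewrite E0 inE.
  by exists r1; rewrite inE.
Qed.

End Final.

Unset Implicit Arguments.

Theorem lemma2p4 (R : realFieldType)
    (VT : finType) (eT : rel VT) (F1 F2 Rs : {set VT})
    (V : finType) (e : rel V) (X Y X' Y' : {set V})
    (eps alpha : R) (phi : VT -> V) :
  is_tree eT -> colour_classes eT F1 F2 ->
  Rs \subset F1 -> (#|Rs| <= 2)%N ->
  (#|Rs| = 2%N -> forall r1 r2 w, r1 \in Rs -> r2 \in Rs -> r1 != r2 ->
      ~~ (eT r1 w && eT r2 w)) ->
  0 < eps -> 2 * eps < alpha ->
  simple_graph e -> [disjoint X & Y] ->
  eps_regular e eps X Y -> 3 * alpha < density R e X Y ->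
  #|F1|%:R <= eps * #|X|%:R -> #|F2|%:R <= eps * #|Y|%:R ->
  X' \subset X -> Y' \subset Y ->
  2 * (eps / alpha) * #|X|%:R < #|X'|%:R ->
  2 * (eps / alpha) * #|Y|%:R < #|Y'|%:R ->
  {in Rs &, injective phi} ->
  (forall r, r \in Rs ->
     phi r \in X' /\ 3 * eps * #|Y|%:R < #|[set y in Y' | e (phi r) y]|%:R) ->
  exists psi : VT -> V,
    [/\ injective psi, {in Rs, psi =1 phi},
        (forall v, psi v \in X :|: Y),
        (forall u v, eT u v -> e (psi u) (psi v)) &
        (psi @: F1 \subset X') && (psi @: F2 \subset Y')].
Proof.
intros; eapply final; eassumption.
Qed.
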